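(* For every integer $b\ge0$, the number $jp_b(1)$ of multiplex juggling patterns with exactly $b$ balls and minimal period $1$ equals $p(b)$, the number of (unordered) partitions of $b$.
   Context: A multiplex siteswap of length $n$ is a sequence $(M_0,\ldots,M_{n-1})$, indexed by $t\in\mathbb{Z}/n\mathbb{Z}$, of finite multisets of positive integers (empty means no throw) such that for every $t$, $|M_t|$ equals the number of pairs $(s,h)$ with $h$ an element of $M_s$ (with multiplicity) and $s+h\equiv t\pmod n$; its number of balls is $\frac1n\sum_t\sum_{h\in M_t}h$. Its minimal period is the least $d\ge1$ with $M_{t+d}=M_t$ for all $t$. A multiplex juggling pattern with $b$ balls and minimal period $n$ is an orbit, under cyclic rotation, of multiplex siteswaps of length $n$ with $b$ balls and minimal period $n$. $p(0)=1$. *)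

(* Defs.v *)
From mathcomp Require Import all_boot.
Set Implicit Arguments. Unset Strict Implicit. Unset Printing Implicit Defensive.

(* A finite multiset of positive integers is represented canonically as a
   nondecreasing (sorted by leq) list of positive naturals; so two such
   lists are equal iff the multisets are equal. *)
Definition mset_ok (m : seq nat) : bool := sorted leq m && all (fun h => 0 < h) m.

Definition MS (s : seq (seq nat)) (t : nat) : seq nat := nth [::] s t.

Definition is_siteswap (n : nat) (s : seq (seq nat)) : Prop :=
  [/\ size s = n, all mset_ok s &
      forall t, t < n ->
        size (MS s t) = \sum_(u < n) count (fun h => (u + h) %% n == t) (MS s u)].

(* number of balls = (1/n) * sum of all throws, i.e. sum = b * n *)
Definition has_balls (n : nat) (s : seq (seq nat)) (b : nat) : Prop :=
  \sum_(t < n) sumn (MS s t) = b * n.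

Definition is_period (n : nat) (s : seq (seq nat)) (d : nat) : Prop :=
  forall t, t < n -> MS s ((t + d) %% n) = MS s t.

Definition minimal_period (n : nat) (s : seq (seq nat)) (d : nat) : Prop :=
  [/\ 0 < d, is_period n s d & forall d', 0 < d' < d -> ~ is_period n s d'].

Definition pattern_rep (b n : nat) (s : seq (seq nat)) : Prop :=
  [/\ is_siteswap n s, has_balls n s b & minimal_period n s n].

Definition rot_equiv (s1 s2 : seq (seq nat)) : Prop := exists k, s2 = rot k s1.

(* num_patterns b n k : the number of multiplex juggling patterns (rotation
   orbits of siteswaps with b balls and minimal period n) is exactly k,
   witnessed by a complete system of k pairwise inequivalent representatives. *)
Definition num_patterns (b n k : nat) : Prop :=
  exists reps : seq (seq (seq nat)),
    [/\ size reps = k,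
        forall r, r \in reps -> pattern_rep b n r,
        forall s, pattern_rep b n s -> exists2 r, r \in reps & rot_equiv r s
      & forall i j, i < j < k -> ~ rot_equiv (nth [::] reps i) (nth [::] reps j)].

(* p(b): number of partitions of b, each partition encoded by its
   multiplicity function (f i = number of parts equal to i+1). *)
Definition npart (b : nat) : nat :=
  #|[set f : {ffun 'I_b -> 'I_b.+1} | \sum_(i < b) i.+1 * f i == b]|.

(* Main.v *)
Require Import Defs.
From mathcomp Require Import all_boot.

Definition tolist {b} (f : {ffun 'I_b -> 'I_b.+1}) : seq nat :=
  sort leq (flatten [seq nseq (f i) i.+1 | i <- enum 'I_b]).

Lemma sum_ord_map b (g : 'I_b -> nat) :
  sumn [seq g i | i <- enum 'I_b] = \sum_(i < b) g i.
Proof. by rewrite sumnE big_map big_enum. Qed.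

Lemma tolist_sum b f : sumn (tolist (b:=b) f) = \sum_(i < b) i.+1 * f i.
Proof.
rewrite /tolist (perm_sumn (permEl (perm_sort _ _))) sumn_flatten -map_comp.
rewrite sum_ord_map; apply: eq_bigr => i _ /=.
by rewrite sumnE big_nseq iter_addn_0 mulnC.
Qed.

Lemma tolist_count b f x : count_mem x (tolist (b:=b) f) =
  \sum_(i < b) (i.+1 == x) * f i.
Proof.
rewrite /tolist (permP (permEl (perm_sort _ _))) count_flatten -map_comp.
rewrite sum_ord_map; apply: eq_bigr => i _ /=.
by rewrite count_nseq.
Qed.

Lemma tolist_countS b f (j : 'I_b) : count_mem j.+1 (tolist (b:=b) f) = f j.
Proof.
rewrite tolist_count (bigD1 j) //= eqxx mul1n big1 ?addn0 // => i /negbTE.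
by rewrite eqSS -val_eqE /= => ->.
Qed.

Lemma tolist_ok b f : mset_ok (tolist (b:=b) f).
Proof.
apply/andP; split; first by apply: sort_sorted; exact: leq_total.
apply/allP => x; rewrite -has_pred1 has_count => H.
case: x H => [|x]; rewrite tolist_count; first by rewrite big1.
by case: (boolP (x < b)) => // Hx; rewrite big1 // => i _; rewrite eqSS;
  case: eqP => // E; rewrite -E ltn_ord in Hx.
Qed.

Arguments tolist_countS {b} f j.
Arguments tolist_ok {b} f.
Arguments tolist_sum {b} f.
Arguments tolist_count {b} f x.

Lemma rot1 (T : Type) (x : T) k : rot k [:: x] = [:: x].
Proof. by case: k. Qed.

Lemma pattern_rep1 b s : pattern_rep b 1 s <->
  exists2 m, s = [:: m] & mset_ok m && (sumn m == b).
Proof.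
split.
  case=> [[Hs Hok _] Hb _]; case: s Hs Hok Hb => [|m [|]] //= _.
  rewrite andbT /has_balls big_ord1 /MS /= muln1 => Hm Hb; exists m => //; by rewrite Hm Hb eqxx.
case=> m -> /andP[Hm /eqP Hb]; split.
- split => //=; first by rewrite Hm.
  by move=> t; rewrite ltnS leqn0 => /eqP ->; rewrite big_ord1 /MS /=
     (eq_count (a2 := predT)) ?count_predT // => h; rewrite modn1.
- by rewrite /has_balls big_ord1 /MS /= muln1.
- split => //; first by move=> t; rewrite ltnS leqn0 => /eqP ->.
  by move=> d /andP[H1 H2]; move: (leq_trans H1 H2).
Qed.

Theorem theorem9 (b : nat) : num_patterns b 1 (npart b).
Proof.
set S := [set f : {ffun 'I_b -> 'I_b.+1} | \sum_(i < b) i.+1 * f i == b].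
have inj : injective (tolist (b:=b)).
  move=> f g E; apply/ffunP => i; apply: val_inj.
  by have := tolist_countS f i; rewrite E tolist_countS.
have injm : injective (fun f => [:: tolist (b:=b) f]).
  by move=> f g [] /inj.
exists [seq [:: tolist f] | f <- enum S]; split.
- by rewrite size_map -cardE.
- move=> r /mapP[f]; rewrite mem_enum inE => /eqP Hf ->.
  apply/pattern_rep1; exists (tolist f) => //.
  by rewrite tolist_ok tolist_sum Hf eqxx.
- move=> s /pattern_rep1[m -> /andP[Hm /eqP Hb]].
  have Hpos : all (fun h => 0 < h) m by case/andP: Hm.
  have Hle : forall x, x \in m -> x <= b.
    move=> x Hx; rewrite -Hb; elim: (m) Hx => //= y l IH.
    rewrite inE => /orP[/eqP -> | /IH H]; first exact: leq_addr.
    exact: leq_trans H (leq_addl _ _).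
  have Hsz : size m <= b.
    rewrite -Hb; elim: (m) Hpos => //= y l IH /andP[Hy Hl].
    by rewrite -add1n leq_add ?IH.
  have Hc : forall i : 'I_b, count_mem i.+1 m < b.+1.
    by move=> i; rewrite ltnS (leq_trans (count_size _ _)).
  pose f := [ffun i : 'I_b => Ordinal (Hc i)].
  have Ef : tolist f = m.
    apply: (sorted_eq leq_trans anti_leq).
    - by case/andP: (tolist_ok f).
    - by case/andP: Hm.
    apply/allP => x _ /=.
    case: (boolP (0 < x <= b)) => [/andP[Hx0 Hxb] | Hx].
      case: x Hx0 Hxb => // x _ Hxb.
      by rewrite (tolist_countS f (Ordinal Hxb)) ffunE.
    rewrite tolist_count big1; last first.
      move=> i _; case: eqP => // E; move: Hx; rewrite -E /=.
      by rewrite (ltn_ord i).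
    rewrite eq_sym -leqn0 leqNgt -has_count; apply/negP => /hasP[y Hy /eqP Ey].
    move: Hx; rewrite -Ey Hle // andbT.
    by move/allP: Hpos => /(_ y Hy) ->.
  exists [:: tolist f]; last by exists 0; rewrite rot0 Ef.
  apply/mapP; exists f => //; rewrite mem_enum inE -tolist_sum Ef Hb //.
- move=> i j /andP[Hij Hjk] [k].
  have HS : npart b = size (enum S) by rewrite -cardE.
  rewrite HS in Hjk.
  have Hik := ltn_trans Hij Hjk.
  rewrite !(nth_map ([ffun=> ord0] : {ffun 'I_b -> 'I_b.+1}) [::]) // rot1.
  move/injm/eqP; rewrite eq_sym nth_uniq ?enum_uniq //.
  by move/eqP=> E; rewrite E ltnn in Hij.
Qed.
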